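(* Let $\mathcal{T}$ be a conforming simplicial mesh in $\mathbb{R}^d$ with nodes $\{\mathbf{x}_i\}$ and adjacency matrix $\mathbf{A}$ ($\mathbf{A}_{i,j}=1$ iff nodes $i\neq j$ are joined by an edge of some cell, and $0$ otherwise). For a point $\mathbf{x}$ in a cell $T$ with vertex set $\mathcal{N}^0(T)$, define for each node $i$ $$\eta_i(\mathbf{x})=\sum_{n\in\mathcal{N}^0(T)} B_n(\mathbf{x})\,\mathbf{A}_{i,n},$$ where $B_n(\mathbf{x})$ is the barycentric coordinate of $\mathbf{x}$ with respect to vertex $n$ of $T$. Let $T_o$ and $T_n$ be two cells sharing a facet $F$, let $\mathcal{N}^1_o,\mathcal{N}^1_n$ be their 1-ring neighbour sets, $\mathcal{N}^1_r=\mathcal{N}^1_o\setminus\mathcal{N}^1_n$ and $\mathcal{N}^1_a=\mathcal{N}^1_n\setminus\mathcal{N}^1_o$. Then $\eta$ is locally diminishing on added/removed nodes: for a point crossing $F$ from $\mathbf{x}^o\in T_o$ to $\mathbf{x}^n\in T_n$ with $\|\mathbf{x}^n-\mathbf{x}^o\|=\mathcal{O}(\epsilon)$, one has $\eta_i(\mathbf{x}^o)=\mathcal{O}(\epsilon)$ for every $i\in\mathcal{N}^1_r$ (computed in $T_o$) and $\eta_i(\mathbf{x}^n)=\mathcal{O}(\epsilon)$ for every $i\in\mathcal{N}^1_a$ (computed in $T_n$).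
   Context: The 1-ring neighbour set $\mathcal{N}^1$ of a cell consists of all mesh nodes that are vertices of the cell or are joined by a mesh edge to a vertex of the cell. Barycentric coordinates of $\mathbf{x}$ in a simplex with vertices $\mathbf{x}_{n_1},\dots,\mathbf{x}_{n_{d+1}}$ are the unique numbers $B_{n_k}(\mathbf{x})$ with $\sum_k B_{n_k}=1$ and $\sum_k B_{n_k}\mathbf{x}_{n_k}=\mathbf{x}$. The constants in $\mathcal{O}(\epsilon)$ depend only on the mesh (e.g. on the distances of the vertices of $T_o,T_n$ opposite $F$ to the facet $F$). *)

(* Defs.v *)
From HB Require Import structures.
From mathcomp Require Import all_boot all_order all_algebra.
From mathcomp Require Import reals.
Set Implicit Arguments. Unset Strict Implicit. Unset Printing Implicit Defensive.
Import Order.TTheory GRing.Theory Num.Theory.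
Local Open Scope ring_scope.

Section Mesh.
Variables (R : realType) (d : nat) (I : finType) (p : I -> 'rV[R]_d).

Definition enorm (v : 'rV[R]_d) : R := Num.sqrt (\sum_(k < d) v 0 k ^+ 2).

Definition is_bary (S : {set I}) (x : 'rV[R]_d) (B : I -> R) : Prop :=
  \sum_(n in S) B n = 1 /\ \sum_(n in S) B n *: p n = x.

Definition in_hull (S : {set I}) (x : 'rV[R]_d) : Prop :=
  exists B : I -> R, is_bary S x B /\ (forall n, n \in S -> 0 <= B n).

Definition aff_indep (S : {set I}) : Prop :=
  forall w : I -> R, \sum_(n in S) w n = 0 -> \sum_(n in S) w n *: p n = 0 ->
    forall n, n \in S -> w n = 0.

Definition conforming_simplicial_mesh (cells : {set {set I}}) : Prop :=
  (forall T, T \in cells -> #|T| = d.+1 /\ aff_indep T) /\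
  (forall T T', T \in cells -> T' \in cells -> forall x,
      in_hull T x -> in_hull T' x -> in_hull (T :&: T') x).

End Mesh.

Section Graph.
Variables (I : finType) (cells : {set {set I}}).

Definition adj (i j : I) : bool :=
  (i != j) && [exists T in cells, (i \in T) && (j \in T)].

Definition adjmx (R : pzRingType) (i j : I) : R := (adj i j)%:R.

Definition ring1 (T : {set I}) : {set I} :=
  [set i | (i \in T) || [exists n in T, adj i n]].

(* eta_i(x) = sum_{n in N^0(T)} B_n(x) A_{i,n}, B the barycentric coords of x in T *)
Definition eta_mesh (R : pzRingType) (T : {set I}) (B : I -> R) (i : I) : R :=
  \sum_(n in T) B n * adjmx R i n.

End Graph.

(* Main.v *)
Require Import Defs.
From HB Require Import structures.
From mathcomp Require Import all_boot all_order all_algebra.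
From mathcomp Require Import reals.
From mathcomp Require Import lra.
Set Implicit Arguments. Unset Strict Implicit. Unset Printing Implicit Defensive.
Import Order.TTheory GRing.Theory Num.Theory.
Local Open Scope ring_scope.

Section LA.
Variables (R : realType) (d : nat) (I : finType) (p : I -> 'rV[R]_d).
Variables (S : {set I}) (x0 : I) (Sx0 : x0 \in S) (HS : #|S| = d.+1)
  (Hind : aff_indep p S).

Let h := enum_rank_in Sx0.

Definition Mx : 'M[R]_(#|S|, d + 1) :=
  \matrix_(i < #|S|) row_mx (p (enum_val i)) (1%:M : 'M[R]_(1,1)).

Lemma vM (v : 'rV_#|S|) : v *m Mx =
  row_mx (\sum_(n in S) v 0 (h n) *: p n) (\sum_(n in S) v 0 (h n))%:M.
Proof.
rewrite mulmx_sum_row.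
rewrite !(big_enum_val (A := mem S)) /=.
under eq_bigr do rewrite rowK.
rewrite /h.
have E i : enum_rank_in Sx0 (enum_val i) = i := enum_valK_in Sx0 i.
rewrite (eq_bigr (fun i => v 0 i *: p (enum_val i))); last by move=> i _; rewrite E.
rewrite (eq_bigr (fun i => v 0 i)); last by move=> i _; rewrite E.
apply: (big_rec3 (fun a b c => a = row_mx b c%:M)).
  by rewrite raddf0 row_mx0.
move=> i y1 y2 y3 _ ->.
by rewrite scale_row_mx add_row_mx scalemx1 raddfD.
Qed.

Lemma Mx_free : row_free Mx.
Proof.
apply: inj_row_free => v; rewrite vM => /eqP; rewrite row_mx_eq0 => /andP[/eqP H1 /eqP H2].
have H3 : \sum_(n in S) v 0 (h n) = 0.
  by have := congr1 (fun M : 'M[R]_1 => M 0 0) H2; rewrite !mxE /= mulr1n.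
have W := Hind H3 H1.
apply/matrixP => i j; rewrite (ord1 i) mxE.
by have := W (enum_val j) (enum_valP j); rewrite /h enum_valK_in.
Qed.

Lemma lam_exists a : a \in S -> exists (zu : 'cV[R]_d) (c0 : R),
  forall n, n \in S -> (p n *m zu) 0 0 + c0 = (n == a)%:R.
Proof.
move=> Sa; have /row_freeP [B HB] := Mx_free.
pose z := B *m delta_mx (h a) (0 : 'I_1).
exists (usubmx z), (dsubmx z 0 0) => n Sn.
have E1 : row (h n) Mx *m z = delta_mx 0 (h n) *m delta_mx (h a) 0.
  by rewrite /z mulmxA -row_mul HB rowE mulmx1.
rewrite rowK /h enum_rankK_in // -(vsubmxK z) mul_row_col mul1mx in E1.
rewrite mul_delta_mx_cond in E1.
have E2 := congr1 (fun M : 'M[R]_1 => M 0 0) E1.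
have AE : forall (A A2 : 'M[R]_1), (A + A2) 0 0 = A 0 0 + A2 0 0 by move=> A A2; rewrite mxE.
have ME : forall (A : 'M[R]_1) k, (A *+ k) 0 0 = A 0 0 *+ k by move=> A; elim=> [|k IH]; rewrite ?mulr0n ?mulrS ?mxE ?IH.
rewrite /= AE ME in E2.
rewrite E2 [delta_mx _ _ _ _]mxE /=.
have -> : (enum_rank_in Sx0 n == enum_rank_in Sx0 a) = (n == a).
  apply/eqP/eqP => [E|->//].
  by rewrite -(enum_rankK_in Sx0 Sn) -(enum_rankK_in Sx0 Sa) E.
by [].
Qed.

Lemma coords_exists v : exists mu : I -> R, is_bary p S v mu.
Proof.
have Hfull : row_full Mx.
  have := Mx_free; rewrite /row_free /row_full => /eqP ->; by rewrite HS addn1.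
have /row_fullP [B HB] := Hfull.
pose u := row_mx v (1%:M : 'M[R]_1) *m B.
have Hu : u *m Mx = row_mx v 1%:M by rewrite /u -mulmxA HB mulmx1.
rewrite vM in Hu; have [H1 H2] := eq_row_mx Hu.
exists (fun n => u 0 (h n)); split => //.
by have := congr1 (fun M : 'M[R]_1 => M 0 0) H2; rewrite !mxE /= !mulr1n.
Qed.
End LA.

Section Main.
Variables (R : realType) (d : nat) (I : finType) (p : I -> 'rV[R]_d).

Lemma lam_bary (zu : 'cV[R]_d) c0 S x B : is_bary p S x B ->
  (x *m zu) 0 0 + c0 = \sum_(n in S) B n * ((p n *m zu) 0 0 + c0).
Proof.
case=> H1 H2; rewrite -H2 mulmx_suml summxE.
have SE : forall a (A : 'M[R]_1), (a *: A) 0 0 = a * A 0 0 by move=> *; rewrite mxE.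
under eq_bigr do rewrite -scalemxAl SE.
under [in RHS]eq_bigr do rewrite mulrDr.
by rewrite big_split /= -big_distrl /= H1 mul1r.
Qed.

Lemma lip (zu : 'cV[R]_d) v :
  `|(v *m zu) 0 0| <= (\sum_k `|zu k 0|) * enorm v.
Proof.
rewrite mxE; apply: le_trans (ler_norm_sum _ _ _) _.
rewrite mulr_suml; apply: ler_sum => k _.
rewrite normrM mulrC; apply: ler_wpM2l; first exact: normr_ge0.
rewrite /enorm -sqrtr_sqr; apply: ler_wsqrtr.
rewrite (bigD1 k) //= lerDl; apply: sumr_ge0 => *; exact: sqr_ge0.
Qed.

Lemma key (cells : {set {set I}}) (Hmesh : conforming_simplicial_mesh p cells)
  To Tn a b :
  To \in cells -> Tn \in cells -> #|To :&: Tn| = d ->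
  To :\: Tn = [set a] -> Tn :\: To = [set b] ->
  exists (zu : 'cV[R]_d) (c0 : R),
   (forall x B, is_bary p To x B -> (x *m zu) 0 0 + c0 = B a) /\
   (forall x B, is_bary p Tn x B -> (forall n, n \in Tn -> 0 <= B n) ->
      (x *m zu) 0 0 + c0 <= 0).
Proof.
move=> HTo HTn HF Ha Hb.
have [cardo indo] := Hmesh.1 To HTo.
have conf := Hmesh.2 To Tn HTo HTn.
have : a \in To :\: Tn by rewrite Ha set11.
rewrite in_setD => /andP[aTn' aTo].
have : b \in Tn :\: To by rewrite Hb set11.
rewrite in_setD => /andP[bTo' bTn].
set F := To :&: Tn in HF conf.
have aF : a \notin F by rewrite in_setI negb_and aTn' orbT.
have bF : b \notin F by rewrite in_setI negb_and bTo'.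
have Eo : To = a |: F by rewrite /F -Ha setUC setID.
have En : Tn = b |: F by rewrite /F setIC -Hb setUC setID.
have [zu [c0 Hl]] := lam_exists aTo indo aTo.
exists zu, c0.
have P1 : forall x B, is_bary p To x B -> (x *m zu) 0 0 + c0 = B a.
  move=> x B HB; rewrite (lam_bary zu c0 HB).
  rewrite (eq_bigr (fun n => B n * (n == a)%:R)); last by move=> n Hn; rewrite Hl.
  rewrite (bigD1 a) //= eqxx mulr1 big1 ?addr0 // => n /andP[_ /negbTE ->].
  by rewrite mulr0.
have HFz : forall n, n \in F -> (p n *m zu) 0 0 + c0 = 0.
  move=> n Hn; rewrite Hl; last by move: Hn; rewrite in_setI => /andP[].
  by have -> : (n == a) = false by apply/negbTE; apply: contraNneq aF => <-.
have P2 : forall x B, is_bary p Tn x B ->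
    (x *m zu) 0 0 + c0 = B b * ((p b *m zu) 0 0 + c0).
  move=> x B HB; rewrite (lam_bary zu c0 HB) En big_setU1 //= big1 ?addr0 //.
  by move=> n Hn; rewrite HFz // mulr0.
have Hpb : (p b *m zu) 0 0 + c0 <= 0.
  rewrite leNgt; apply/negP => Hpos.
  have [mu Hmu] := coords_exists aTo cardo indo (p b).
  have mua : mu a = (p b *m zu) 0 0 + c0 by rewrite (P1 _ _ Hmu).
  pose K := \sum_(n in To) `|mu n|.
  have K0 : 0 <= K by apply: sumr_ge0 => *; exact: normr_ge0.
  have Kn : forall n, n \in To -> `|mu n| <= K.
    move=> n Hn; rewrite /K (bigD1 n) //= lerDl; apply: sumr_ge0 => *; exact: normr_ge0.
  pose t := (1 + d%:R * K)^-1.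
  pose s := K * t.
  have D0 : 0 < 1 + d%:R * K by apply: (lt_le_trans ltr01); rewrite lerDl mulr_ge0.
  have t0 : 0 < t by rewrite invr_gt0.
  have s0 : 0 <= s by apply: mulr_ge0 => //; exact: ltW.
  have tsum : t + s *+ d = 1.
    by rewrite /s -mulr_natl mulrA -{1}(mul1r t) -mulrDl /t mulfV // gt_eqF.
  pose x := t *: p b + \sum_(n in F) s *: p n.
  pose beta := fun n => if n == b then t else s.
  have hB : is_bary p Tn x beta.
    split.
      rewrite En big_setU1 //= /beta eqxx (eq_bigr (fun _ => s)) ?sumr_const ?HF //.
      by move=> n Hn; have -> : (n == b) = false by apply/negbTE; apply: contraNneq bF => <-.
    rewrite En big_setU1 //= /beta eqxx /x; congr (_ + _); apply: eq_bigr => n Hn.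
    by have -> : (n == b) = false by apply/negbTE; apply: contraNneq bF => <-.
  have hn : in_hull p Tn x.
    exists beta; split => // n _; rewrite /beta; case: (n == b) => //; exact: ltW.
  have ho : in_hull p To x.
    exists (fun n => if n == a then t * mu a else s + t * mu n); split; last first.
      move=> n Hn; case: (n == a).
        by apply: mulr_ge0; [exact: ltW | rewrite mua ltW].
      rewrite /s (mulrC t) -mulrDl; apply: mulr_ge0; last exact: ltW.
      have h1 : - mu n <= K by apply: le_trans (Kn _ Hn); rewrite -normrN ler_norm.
      lra.
    case: Hmu; rewrite Eo !big_setU1 //= => Hm1 Hm2.
    have Ena : forall n, n \in F -> (n == a) = false.
      by move=> n Hn; apply/negbTE; apply: contraNneq aF => <-.
    split.
      rewrite big_setU1 //= eqxx (eq_bigr (fun n => s + t * mu n)); last by move=> n Hn; rewrite Ena.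
      rewrite big_split /= sumr_const HF -big_distrr /= addrA (addrC (t * mu a)) -addrA.
      by rewrite -mulrDr Hm1 mulr1 addrC.
    rewrite big_setU1 //= eqxx (eq_bigr (fun n => s *: p n + t *: (mu n *: p n))); last first.
      by move=> n Hn; rewrite Ena //=; rewrite scalerDl scalerA.
    rewrite big_split /= -(scaler_sumr t) -scalerA addrCA -scalerDr Hm2.
    by rewrite /x addrC.
  have [g [Hg _]] := conf x ho hn.
  have := lam_bary zu c0 Hg.
  rewrite big1; last by move=> n Hn; rewrite HFz // mulr0.
  rewrite (P2 _ _ hB) /beta eqxx => /eqP.
  by rewrite mulf_eq0 (gt_eqF t0) (gt_eqF Hpos).
split => // x B HB HB0.
rewrite (P2 _ _ HB); apply: mulr_ge0_le0 => //; exact: HB0.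
Qed.
End Main.

Lemma eta_bound (R : realType) (I : finType) (cells : {set {set I}}) To Tn a
  (B : I -> R) i : To :\: Tn = [set a] -> (forall n, n \in To -> 0 <= B n) ->
  i \in ring1 cells To :\: ring1 cells Tn ->
  `|eta_mesh (R:=R) cells To B i| <= B a.
Proof.
move=> Ha HB; rewrite in_setD => /andP[Hi _].
move: Hi; rewrite /ring1 in_set negb_or => /andP[_ Hex].
have : a \in To :\: Tn by rewrite Ha set11.
rewrite in_setD => /andP[_ aTo].
have Z : forall n, n \in Tn -> adj cells i n = false.
  move=> n Hn; apply/negP => H; move/negP: Hex; apply; apply/existsP; exists n.
  by rewrite Hn H.
rewrite /eta_mesh (bigD1 a) //= big1 ?addr0; last first.
  move=> n /andP[Hn Hna]; rewrite /adjmx Z ?mulr0 //.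
  apply/negPn/negP => Hnt.
  have : n \in To :\: Tn by rewrite in_setD Hnt Hn.
  by rewrite Ha in_set1 (negbTE Hna).
rewrite /adjmx; case: (adj cells i a); rewrite ?mulr1 ?mulr0 ?normr0 ?HB //.
by rewrite ger0_norm ?HB.
Qed.

Theorem mainTheorem2 (R : realType) (d : nat) (I : finType)
    (p : I -> 'rV[R]_d) (cells : {set {set I}})
    (Hmesh : conforming_simplicial_mesh p cells)
    (To Tn : {set I}) (HTo : To \in cells) (HTn : Tn \in cells)
    (Hneq : To != Tn) (Hfacet : #|To :&: Tn| = d) :
  exists C : R, 0 <= C /\
    forall (xo xn : 'rV[R]_d) (Bo Bn : I -> R),
      is_bary p To xo Bo -> (forall n, n \in To -> 0 <= Bo n) ->
      is_bary p Tn xn Bn -> (forall n, n \in Tn -> 0 <= Bn n) ->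
      (forall i, i \in ring1 cells To :\: ring1 cells Tn ->
         `|eta_mesh (R:=R) cells To Bo i| <= C * enorm (xn - xo)) /\
      (forall i, i \in ring1 cells Tn :\: ring1 cells To ->
         `|eta_mesh (R:=R) cells Tn Bn i| <= C * enorm (xn - xo)).
Proof.
have [cardo _] := Hmesh.1 To HTo.
have [cardn _] := Hmesh.1 Tn HTn.
have Hfacet' : #|Tn :&: To| = d by rewrite setIC.
have [a Ha] : exists a, To :\: Tn = [set a].
  apply/cards1P; have := cardsID Tn To; rewrite Hfacet cardo => /eqP.
  by rewrite -addn1 eqn_add2l.
have [b Hb] : exists b, Tn :\: To = [set b].
  apply/cards1P; have := cardsID To Tn; rewrite Hfacet' cardn => /eqP.
  by rewrite -addn1 eqn_add2l.
have [zo [co [Po1 Po2]]] := key Hmesh HTo HTn Hfacet Ha Hb.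
have [zn [cn [Pn1 Pn2]]] := key Hmesh HTn HTo Hfacet' Hb Ha.
pose Co := \sum_k `|zo k 0|.
pose Cn := \sum_k `|zn k 0|.
have Co0 : 0 <= Co by apply: sumr_ge0 => *; exact: normr_ge0.
have Cn0 : 0 <= Cn by apply: sumr_ge0 => *; exact: normr_ge0.
exists (Co + Cn); split; first exact: addr_ge0.
move=> xo xn Bo Bn Hxo Ho0 Hxn Hn0.
have BE : forall A A2 : 'M[R]_1, (A - A2) 0 0 = A 0 0 - A2 0 0.
  by move=> A A2; rewrite !mxE.
have e0 : 0 <= enorm (xn - xo) by exact: sqrtr_ge0.
have eCo : 0 <= Co * enorm (xn - xo) by exact: mulr_ge0.
have eCn : 0 <= Cn * enorm (xn - xo) by exact: mulr_ge0.
rewrite mulrDl.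
split => i Hi.
  have E := eta_bound Ha Ho0 Hi.
  have L := lip zo (xn - xo); rewrite mulmxBl BE in L.
  have N := ler_norm (- ((xn *m zo) 0 0 - (xo *m zo) 0 0)); rewrite normrN in N.
  have H1 := Po1 _ _ Hxo; have H2 := Po2 _ _ Hxn Hn0.
  rewrite -/Co in L; lra.
have E := eta_bound Hb Hn0 Hi.
have L := lip zn (xn - xo); rewrite mulmxBl BE in L.
have N := ler_norm ((xn *m zn) 0 0 - (xo *m zn) 0 0).
have H1 := Pn1 _ _ Hxn; have H2 := Pn2 _ _ Hxo Ho0.
rewrite -/Cn in L; lra.
Qed.
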